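(* Let $\Bbbk$ be a field of characteristic $0$, $n\ge3$, and let $(A,\mu,(\alpha_1,\ldots,\alpha_{n-1}))$ be an $n$-ary totally Hom-associative algebra over $\Bbbk$, with $\mu(x_1,\ldots,x_n)=(x_1\cdots x_n)$. Suppose $a\in A$ satisfies (1) $\alpha_{n-1}(a)=a$, and (2) $(x_1,\ldots,x_{n-1},a)=(x_1,\ldots,x_{n-2},a,x_{n-1})$ for all $x_i\in A$. Define the $(n-1)$-ary product $(x_1,\ldots,x_{n-1})'=(x_1,\ldots,x_{n-1},a)$. Then $A_1=(A,(\cdot)',(\alpha_1,\ldots,\alpha_{n-2}))$ is an $(n-1)$-ary totally Hom-associative algebra. Moreover, if $A$ is multiplicative, then so is $A_1$.
   Context: An $m$-ary Hom-algebra $(V,\mu,(\alpha_1,\ldots,\alpha_{m-1}))$ is a vector space $V$ with an $m$-linear map $\mu$ (written $\mu(a_1,\ldots,a_m)=(a_1\cdots a_m)$) and linear maps $\alpha_i\colon V\to V$. It is multiplicative if all $\alpha_i$ equal one map $\alpha$ and $\alpha\circ\mu=\mu\circ\alpha^{\otimes m}$. It is $m$-ary totally Hom-associative if for every $i\in\{1,\ldots,m-1\}$ and all $a_1,\ldots,a_{2m-1}$: $(\alpha_1(a_1),\ldots,\alpha_{i-1}(a_{i-1}),(a_i\cdots a_{i+m-1}),\alpha_i(a_{i+m}),\ldots,\alpha_{m-1}(a_{2m-1}))=(\alpha_1(a_1),\ldots,\alpha_i(a_i),(a_{i+1}\cdots a_{i+m}),\alpha_{i+1}(a_{i+m+1}),\ldots,\alpha_{m-1}(a_{2m-1}))$.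 *)

(* Defs.v *)
From HB Require Import structures.
From mathcomp Require Import all_boot all_order all_algebra.
Set Implicit Arguments. Unset Strict Implicit. Unset Printing Implicit Defensive.
Import GRing.Theory.
Local Open Scope ring_scope.

(* Conventions: indices are 0-based.  An m-ary product is a map
   mu : ('I_m -> V) -> V; the twisting maps alpha_1..alpha_{m-1} are the
   values alpha 0, ..., alpha (m-2) of a family alpha : nat -> {linear V -> V}
   (values at indices >= m-1 are irrelevant). *)
Section HomAlg.
Variables (K : fieldType) (V : lmodType K).

Definition multilinear (m : nat) (mu : ('I_m -> V) -> V) : Prop :=
  forall (x : 'I_m -> V) (i : 'I_m),
    linear (fun v : V => mu (fun k => if k == i then v else x k)).

(* The (2m-1)-argument expression
   (alpha_1(a_1),...,alpha_{j}(a_{j}), (a_{j+1} ... a_{j+m}),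
    alpha_{j+1}(a_{j+m+1}), ..., alpha_{m-1}(a_{2m-1}))
   with the inner product at 0-based position j; a is 0-based. *)
Definition hassoc_expr (m : nat) (mu : ('I_m -> V) -> V)
    (alpha : nat -> {linear V -> V}) (a : nat -> V) (j : nat) : V :=
  mu (fun k : 'I_m =>
        if (k < j)%N then alpha k (a k)
        else if (val k == j) then mu (fun l : 'I_m => a (j + l)%N)
        else alpha k.-1 (a (k + m - 1)%N)).

(* m-ary totally Hom-associative: for every 1-based i in {1,...,m-1}
   (0-based j = i-1), the expression with the inner product at position i
   equals the one with the inner product at position i+1. *)
Definition totally_hom_assoc (m : nat) (mu : ('I_m -> V) -> V)
    (alpha : nat -> {linear V -> V}) : Prop :=
  forall (j : nat), (j < m.-1)%N ->
    forall a : nat -> V, hassoc_expr mu alpha a j = hassoc_expr mu alpha a j.+1.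

Definition hom_multiplicative (m : nat) (mu : ('I_m -> V) -> V)
    (alpha : nat -> {linear V -> V}) : Prop :=
  exists al : {linear V -> V},
    (forall i, (i < m.-1)%N -> alpha i =1 al) /\
    (forall x : 'I_m -> V, al (mu x) = mu (fun k => al (x k))).

Definition reduced_prod (n : nat) (mu : ('I_n -> V) -> V) (a : V)
    (x : 'I_n.-1 -> V) : V :=
  mu (fun k : 'I_n => match insub (val k) : option 'I_n.-1 with
                      | Some k' => x k'
                      | None => a
                      end).
End HomAlg.

(* Main.v *)
Require Import Defs.
From HB Require Import structures.
From mathcomp Require Import all_boot all_order all_algebra.
From mathcomp Require Import zify.
From Stdlib Require Import FunctionalExtensionality.
Import GRing.Theory.
Local Open Scope ring_scope.

Theorem theorem3p4 (K : fieldType) (hK : [pchar K] =i pred0)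
    (A : lmodType K) (n : nat) (hn : (3 <= n)%N)
    (mu : ('I_n -> A) -> A) (alpha : nat -> {linear A -> A})
    (hmu : multilinear mu) (hassoc : totally_hom_assoc mu alpha)
    (a : A)
    (h1 : alpha (n - 2)%N a = a)
    (h2 : forall x : nat -> A,
        mu (fun k : 'I_n => if (k < n - 1)%N then x (val k) else a)
        = mu (fun k : 'I_n => if (k < n - 2)%N then x (val k)
                              else if (val k == n - 2)%N then a
                              else x (n - 2)%N)) :
  multilinear (reduced_prod mu a) /\
  totally_hom_assoc (reduced_prod mu a) alpha /\
  (hom_multiplicative mu alpha -> hom_multiplicative (reduced_prod mu a) alpha).
Proof.
have eq_mu : forall f g : 'I_n -> A, (forall k, f k = g k) -> mu f = mu g.
  by move=> f g H; congr mu; apply: functional_extensionality.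
split.
  move=> x i.
  have -> : (fun v : A => reduced_prod mu a (fun k => if k == i then v else x k))
    = (fun v => mu (fun k : 'I_n => if k == widen_ord (leq_pred n) i then v
        else match insub (val k) : option 'I_n.-1 with Some k' => x k' | None => a end)).
    apply: functional_extensionality => v; rewrite /reduced_prod.
    apply: (eq_mu) => k; case: insubP => [k' Hk Hv | Hk]; move: (ltn_ord k) => Hko; [have Hk2 : (nat_of_ord k < n.-1)%N := Hk | have Hk' : (n.-1 <= k)%N by rewrite leqNgt; exact: Hk].
      have -> : (k == widen_ord (leq_pred n) i) = (k' == i).
        by apply/eqP/eqP => [E|E]; apply: val_inj => /=; rewrite -?Hv ?E //; move: E => /(congr1 val) /= <-.
      by case: (k' == i).
    have -> : (k == widen_ord (leq_pred n) i) = false.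
      apply/negP => /eqP E; move: Hk; rewrite E /= ltn_ord //.
    by [].
  exact: hmu.
split.
  move=> j Hj a'.
  set b : nat -> A := fun i => if (i < j + n - 1)%N then a' i
     else if (i == j + n - 1)%N then a else if (i < 2 * n - 2)%N then a' i.-1 else a.
  have Hj' : (j < n.-1)%N by lia.
  apply: (@etrans _ _ (hassoc_expr mu alpha b j)).
    rewrite /hassoc_expr /reduced_prod; apply: (eq_mu) => k.
    case: insubP => [k' Hk Hv | Hk]; move: (ltn_ord k) => Hko; [have Hk2 : (nat_of_ord k < n.-1)%N := Hk | have Hk' : (n.-1 <= k)%N by rewrite leqNgt; exact: Hk].
      have Hv' : nat_of_ord k' = nat_of_ord k := Hv.
      rewrite Hv' ?Hv.
      case: ifP => Hkj.
        by rewrite /b ifT //; lia.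
      case: ifP => Hkj2; [| have Hkj3 : nat_of_ord k <> j by move=> E; rewrite -[\val k]/(nat_of_ord k) E eqxx in Hkj2].
        apply: (eq_mu) => l; case: insubP => [l' Hl Hlv | Hl]; move: (ltn_ord l) => Hlo; [have Hlv' : nat_of_ord l' = nat_of_ord l := Hlv | have Hl' : (n.-1 <= l)%N by rewrite leqNgt; exact: Hl].
          by rewrite /b ifT -Hlv //; lia.
        by rewrite /b ifF; [rewrite ifT //; lia | lia].
      rewrite /b ifF; last lia.
      rewrite ifF; last lia. rewrite ifT; last lia.
      congr (alpha _ (a' _)); lia.
    rewrite ifF; last lia. rewrite ifF; last lia.
    have -> : (k.-1 = n - 2)%N by lia.
    by rewrite /b ifF; [rewrite ifF; [rewrite ifF ?h1 //; lia | lia] | lia].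
  rewrite (@hassoc j Hj' b).
  rewrite /hassoc_expr /reduced_prod; apply: (eq_mu) => k.
  case: insubP => [k' Hk Hv | Hk]; move: (ltn_ord k) => Hko; [have Hk2 : (nat_of_ord k < n.-1)%N := Hk | have Hk' : (n.-1 <= k)%N by rewrite leqNgt; exact: Hk]; last first.
    rewrite ifF; last lia. rewrite ifF; last lia.
    have -> : (k.-1 = n - 2)%N by lia.
    by rewrite /b ifF; [rewrite ifF; [rewrite ifF ?h1 //; lia | lia] | lia].
  have Hv' : nat_of_ord k' = nat_of_ord k := Hv.
  rewrite Hv' ?Hv.
  case: ifP => Hkj.
    by rewrite /b ifT //; lia.
  case: ifP => Hkj2; [| have Hkj3 : nat_of_ord k <> j.+1 by move=> E; rewrite -[\val k]/(nat_of_ord k) E eqxx in Hkj2].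
    have := h2 (fun l => a' (j.+1 + l)%N).
    have -> : mu (fun k0 : 'I_n => if (k0 < n - 1)%N then a' (j.+1 + k0)%N else a)
      = mu (fun l : 'I_n => match insub (val l) : option 'I_n.-1 with
                | Some l' => a' (j.+1 + l')%N | None => a end).
      apply: (eq_mu) => l; case: insubP => [l' Hl Hlv | Hl]; move: (ltn_ord l) => Hlo; [have Hlv' : nat_of_ord l' = nat_of_ord l := Hlv | have Hl' : (n.-1 <= l)%N by rewrite leqNgt; exact: Hl].
        by rewrite ifT -Hlv //; lia.
      by rewrite ifF //; lia.
    move=> ->; apply: (eq_mu) => l; move: (ltn_ord l) => Hlo.
    case: ifP => Hl1.
      by rewrite /b ifT //; lia.
    case: ifP => Hl2.
      move/eqP: Hl2 => Hl2; have Hl3 : nat_of_ord l = (n-2)%N := Hl2.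
      by rewrite /b ifF; [rewrite ifT //; lia | lia].
    have Hl4 : nat_of_ord l <> (n-2)%N by move=> E; rewrite -[\val l]/(nat_of_ord l) E eqxx in Hl2.
    rewrite /b ifF; last lia. rewrite ifF; last lia. rewrite ifT; last lia.
    congr (a' _); lia.
  rewrite /b ifF; last lia.
  rewrite ifF; last lia. rewrite ifT; last lia.
  congr (alpha _ (a' _)); lia.
move=> [al [Hal Hm]]; exists al; split.
  move=> i Hi; apply: Hal; lia.
move=> x; rewrite /reduced_prod Hm; apply: (eq_mu) => k.
case: insubP => [k' _ _ | _] //.
rewrite -(Hal (n - 2)%N) ?h1 //; lia.
Qed.
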